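(* Let $n\geq 1$, let $p$ be a prime, let $R\subset E_n=\{1,\dots,n\}$ and let $S\subset E_n$ be a nonempty subset. Then there exists exactly one subset $T\subset E_n$ such that $T$ is $(R,S)$-admissible and $T$ is $i$-positive for every $i\in S$. Equivalently, there exists a unique positive admissible homogeneous $S$-adapted $p$-cone, namely $\{x\in\mathbb{Z}^n : F^{(i)}_T(x)\leq 0 \text{ for all } i\in S\}$ for this $T$.
   Context: Indices of tuples $x=(x_1,\dots,x_n)\in\mathbb{Z}^n$ and elements of $E_n$ are taken modulo $n$ (e.g. $x_{n+1}=x_1$, and $0$ denotes $n$). For $T\subset E_n$ and $i\in E_n$ put $\delta_T^{(i)}=-1$ if $i\in T$ and $\delta_T^{(i)}=1$ if $i\notin T$. For $d\in E_n$ and $T\subset E_n$, the $p$-expression with starting index $d$ is the linear form $F^{(d)}_T(x)=\sum_{i=0}^{n-1}p^i\,\delta_T^{(d+i)}\,x_{d+i}$ on $\mathbb{Z}^n$. An $S$-adapted $p$-cone is a cone of the form $\{x\in\mathbb{Z}^n: F^{(i)}_{T^{(i)}}(x)\leq 0 \ \forall i\in S\}$ attached to a family $(T^{(i)})_{i\in S}$ of subsets of $E_n$; it is homogeneous if all $T^{(i)}$ equal a common $T$ (so homogeneous $S$-adapted $p$-cones are parametrized by subsets $T$). A subset $T\subset E_n$ is $(R,S)$-admissible if for every $i\in E_n$ with $i+1\notin S$: if $i\notin R$ then exactly one of $i,i+1$ lies in $T$, and if $i\in R$ then either both or neither of $i,i+1$ lie in $T$. For $i\in E_n$, $T$ is $i$-positive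 if ($i-1\in T \iff i-1\in R$). An $S$-adapted $p$-cone is admissible (resp. positive) if each $T^{(i)}$ is $(R,S)$-admissible (resp. $i$-positive). *)

(* Defs.v *)
From mathcomp Require Import all_boot all_order all_algebra.
Set Implicit Arguments. Unset Strict Implicit. Unset Printing Implicit Defensive.

(* E_n = {1,...,n} is modelled by 'I_n = {0,...,n-1} (element k+1 <-> k).
   Indices are cyclic: i+1 is [ordS i] (= i.+1 %% n), i-1 is [ord_pred i]. *)

Definition admissible n (R S T : {set 'I_n}) : Prop :=
  forall i : 'I_n, ordS i \notin S ->
    if i \in R then (i \in T) = (ordS i \in T)
    else (i \in T) != (ordS i \in T).

Definition i_positive n (R T : {set 'I_n}) (i : 'I_n) : Prop :=
  (ord_pred i \in T) = (ord_pred i \in R).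

Open Scope ring_scope.
Definition delta n (T : {set 'I_n}) (i : 'I_n) : int := if i \in T then -1 else 1.
Definition iter_ordS n (d : 'I_n) (k : nat) : 'I_n := iter k (@ordS n) d.
Definition pexpr n (p : nat) (T : {set 'I_n}) (d : 'I_n) (x : 'I_n -> int) : int :=
  \sum_(k < n) (p ^ k)%:Z * delta T (iter_ordS d k) * x (iter_ordS d k).
Definition hom_cone n (p : nat) (S T : {set 'I_n}) : (('I_n -> int) -> Prop) :=
  fun x => forall i, i \in S -> pexpr p T i x <= 0.
Close Scope ring_scope.

(* Main.v *)
Require Import Defs.
From mathcomp Require Import all_boot all_order all_algebra.
From mathcomp Require Import zify.

Lemma val_iter_ordS n (k : 'I_n) m : val (iter m (@ordS n) k) = (k + m) %% n.
Proof.
elim: m => [|m IH] /=; first by rewrite addn0 modn_small.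
by rewrite IH addnS -addn1 modnDml addn1.
Qed.

Lemma key n (S : {set 'I_n}) (hS : S != set0) (D : 'I_n -> bool) :
  (forall k, ordS k \in S -> D k = false) ->
  (forall k, ordS k \notin S -> D (ordS k) = D k) -> forall k, D k = false.
Proof.
move=> H1 H2 k; apply/negP => Dk.
have [s sS] := set0Pn _ hS.
have step : forall m, D (iter m (@ordS n) k) && (iter m.+1 (@ordS n) k \notin S).
  elim=> [|m IH] /=.
    case Sk: (ordS k \in S); first by rewrite H1 in Dk.
    by rewrite Dk.
  move/andP: IH => [Dm nS]; rewrite /= in nS.
  have Dm1 : D (ordS (iter m (@ordS n) k)) by rewrite H2.
  rewrite Dm1 /=.
  case Sk: (ordS (ordS (iter m (@ordS n) k)) \in S) => //.
  by rewrite H1 in Dm1.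
have /andP [_ nS] := step (n - k.+1 + s).
have E : iter (n - k.+1 + s).+1 (@ordS n) k = s.
  apply: val_inj; rewrite val_iter_ordS.
  have lk := ltn_ord k; have ls := ltn_ord s.
  have -> : k + (n - k.+1 + s).+1 = n + s by lia.
  by rewrite -modnDml modnn add0n modn_small.
by rewrite E sS in nS.
Qed.

Theorem theoremA (n : nat) (hn : 0 < n) (p : nat) (hp : prime p)
    (R S : {set 'I_n}) (hS : S != set0) :
  exists! T : {set 'I_n},
    admissible R S T /\ (forall i : 'I_n, i \in S -> i_positive R T i).
Proof.
pose phi (T : {set 'I_n}) k :=
  if ordS k \in S then (k \in T) != (k \in R)
  else if k \in R then (k \in T) != (ordS k \in T)
  else (k \in T) == (ordS k \in T).
pose Phi T := [set k | phi T k].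
have good : forall T, Phi T = set0 <->
    admissible R S T /\ (forall i : 'I_n, i \in S -> i_positive R T i).
  move=> T; split.
    move=> E; have F : forall k, phi T k = false.
      move=> k; apply/negP => h.
      have : k \in Phi T by rewrite inE.
      by rewrite E inE.
    split.
      move=> i nS; have := F i; rewrite /phi (negbTE nS).
      by case: (i \in R); case: (i \in T); case: (ordS i \in T).
    move=> i iS; rewrite /i_positive.
    have := F (ord_pred i); rewrite /phi ord_predK iS.
    by case: (ord_pred i \in T); case: (ord_pred i \in R).
  move=> [ad pos]; apply/setP => k; rewrite !inE /phi.
  case kS: (ordS k \in S).
    by have := pos _ kS; rewrite /i_positive ordSK => ->; rewrite eqxx.
  have := ad k (negbT kS).
  by case: (k \in R); case: (k \in T); case: (ordS k \in T).
have inj : injective Phi.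
  move=> T1 T2 E.
  suff K : forall k, ((k \in T1) != (k \in T2)) = false.
    by apply/setP => k; have := K k; case: (k \in T1); case: (k \in T2).
  apply: (@key n S hS (fun k => (k \in T1) != (k \in T2))).
    move=> k kS; have /setP /(_ k) := E; rewrite !inE /phi kS.
    by case: (k \in T1); case: (k \in T2); case: (k \in R).
  move=> k kS; have /setP /(_ k) := E; rewrite !inE /phi (negbTE kS).
  by case: (k \in T1); case: (k \in T2); case: (k \in R);
     case: (ordS k \in T1); case: (ordS k \in T2).
have [g _ gK] := injF_bij inj.
exists (g set0); split; first by apply/good; rewrite gK.
by move=> T /good E; apply: inj; rewrite gK E.
Qed.
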